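(* Let $\mathcal{C}$ be a Fraïssé class with Fraïssé limit $\mathbf{U}$ and let $\mathbf{V},\mathbf{W}\in\overline{\mathcal{C}}$. If $r:\mathbf{U}\twoheadrightarrow\mathbf{V}$ is a universal homogeneous retraction and $s:\mathbf{V}\twoheadrightarrow\mathbf{W}$ is any retraction, then there exists a universal homogeneous retraction $\hat s:\mathbf{U}\twoheadrightarrow\mathbf{W}$.
   Context: An embedding is an injective homomorphism reflecting all relations. An age is a class of finitely generated structures of one signature with countably many isomorphism types, closed under finitely generated substructures (up to isomorphism) and with the joint embedding property; $\overline{\mathcal{C}}$ is the class of countable structures all of whose finitely generated substructures are isomorphic to members of $\mathcal{C}$; a Fraïssé class is an age with the amalgamation property, and its Fraïssé limit is the unique countable homogeneous structure with that age. A homomorphism $r:\mathbf{A}\to\mathbf{B}$ is a retraction if some homomorphism $\iota:\mathbf{B}\to\mathbf{A}$ satisfies $r\circ\iota=1_{\mathbf{B}}$. A universal homogeneous retraction $r:\mathbf{U}\twoheadrightarrow\mathbf{T}$ is a retraction such that (universality) for every $\mathbf{A}\in\overline{\operatorname{Age}(\mathbf{U})}$ and homomorphism $h:\mathbf{A}\to\mathbf{T}$ there is an embedding $\iota:\mathbf{A}\hookrightarrow\mathbf{U}$ with $h=r\circ\iota$, and (homogeneity) for every finitely generated $\mathbf{A}\le\mathbf{U}$ and embedding $\iota:\mathbf{A}\hookrightarrow\mathbf{U}$ with $r\circ\iota=r\restriction_A$ there is an automorphism $\alpha$ of $\mathbf{U}$ with $r\circ\alpha=r$ and $\alpha\restriction_A=\iota$.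 *)

(* Defs.v *)
From Stdlib Require Import List.
From Stdlib Require Fin.
Set Implicit Arguments.
Unset Strict Implicit.

(** Signatures: function symbols (constants = arity 0) and relation symbols. *)
Record Sig := {
  fsym : Type; farity : fsym -> nat;
  rsym : Type; rarity : rsym -> nat }.

Record Structure (L : Sig) := {
  carrier :> Type;
  fint : forall f : fsym L, (Fin.t (farity f) -> carrier) -> carrier;
  rint : forall r : rsym L, (Fin.t (rarity r) -> carrier) -> Prop }.

Arguments fint {L} s f a.
Arguments rint {L} s r a.
Arguments carrier {L} s.

Section Defs.
Variable L : Sig.

Definition homomorphism (A B : Structure L) (h : A -> B) : Prop :=
  (forall f a, h (fint A f a) = fint B f (fun i => h (a i))) /\
  (forall r a, rint A r a -> rint B r (fun i => h (a i))).

Definition embedding (A B : Structure L) (h : A -> B) : Prop :=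
  homomorphism h /\ (forall x y, h x = h y -> x = y) /\
  (forall r a, rint B r (fun i => h (a i)) -> rint A r a).

Definition isomorphism (A B : Structure L) (h : A -> B) : Prop :=
  embedding h /\ (forall y, exists x, h x = y).

Definition isomorphic (A B : Structure L) : Prop := exists h : A -> B, isomorphism h.

Definition automorphism (A : Structure L) (h : A -> A) : Prop := isomorphism h.

Definition closed (A : Structure L) (S : A -> Prop) : Prop :=
  forall f a, (forall i, S (a i)) -> S (fint A f a).

Definition generated (A : Structure L) (l : list A) (x : A) : Prop :=
  forall T : A -> Prop, closed T -> (forall y, In y l -> T y) -> T x.

Definition sub (A : Structure L) (S : A -> Prop) (HS : closed S) : Structure L :=
  {| carrier := {x : A | S x};
     fint := fun f a => exist S (fint A f (fun i => proj1_sig (a i)))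
                              (HS f _ (fun i => proj2_sig (a i)));
     rint := fun r a => rint A r (fun i => proj1_sig (a i)) |}.

Definition fg_subset (A : Structure L) (S : A -> Prop) : Prop :=
  exists l : list A, forall x, S x <-> generated l x.

Definition fin_gen (A : Structure L) : Prop :=
  exists l : list A, forall x, generated l x.

Definition countable_structure (A : Structure L) : Prop :=
  exists f : A -> nat, forall x y, f x = f y -> x = y.

Definition sclass := Structure L -> Prop.

Definition age (U : Structure L) : sclass :=
  fun A => fin_gen A /\ exists h : A -> U, embedding h.

Definition cbar (C : sclass) : sclass :=
  fun A => countable_structure A /\
    forall (S : A -> Prop) (HS : closed S), fg_subset S ->
      exists B, C B /\ isomorphic (sub HS) B.

Definition is_age (C : sclass) : Prop :=
  (forall A, C A -> fin_gen A) /\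
  (exists e : nat -> Structure L, forall A, C A -> exists n, isomorphic A (e n)) /\
  (forall A, C A -> forall (S : A -> Prop) (HS : closed S), fg_subset S ->
      exists B, C B /\ isomorphic (sub HS) B) /\
  (forall A B, C A -> C B ->
      exists D, C D /\ (exists f : A -> D, embedding f) /\ (exists g : B -> D, embedding g)).

Definition amalgamation (C : sclass) : Prop :=
  forall (A B1 B2 : Structure L) (f1 : A -> B1) (f2 : A -> B2),
    C A -> C B1 -> C B2 -> embedding f1 -> embedding f2 ->
    exists (D : Structure L) (g1 : B1 -> D) (g2 : B2 -> D),
      C D /\ embedding g1 /\ embedding g2 /\ forall a, g1 (f1 a) = g2 (f2 a).

Definition fraisse_class (C : sclass) : Prop := is_age C /\ amalgamation C.

(** Homogeneity: every embedding of a f.g. substructure into U (i.e. every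
    isomorphism between f.g. substructures) extends to an automorphism. *)
Definition homogeneous (U : Structure L) : Prop :=
  forall (S : U -> Prop) (HS : closed S), fg_subset S ->
    forall iota : sub HS -> U, embedding iota ->
      exists alpha : U -> U, automorphism alpha /\
        forall x : sub HS, alpha (proj1_sig x) = iota x.

Definition fraisse_limit (C : sclass) (U : Structure L) : Prop :=
  countable_structure U /\ homogeneous U /\
  (forall A, C A -> exists h : A -> U, embedding h) /\
  (forall A, age U A -> exists B, C B /\ isomorphic A B).

Definition retraction (A B : Structure L) (r : A -> B) : Prop :=
  homomorphism r /\ exists iota : B -> A, homomorphism iota /\ forall b, r (iota b) = b.

Definition uh_retraction (U T : Structure L) (r : U -> T) : Prop :=
  retraction r /\
  (forall (A : Structure L) (h : A -> T), cbar (age U) A -> homomorphism h ->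
     exists iota : A -> U, embedding iota /\ forall a, h a = r (iota a)) /\
  (forall (S : U -> Prop) (HS : closed S), fg_subset S ->
     forall iota : sub HS -> U, embedding iota ->
       (forall x : sub HS, r (iota x) = r (proj1_sig x)) ->
       exists alpha : U -> U, automorphism alpha /\ (forall x, r (alpha x) = r x) /\
         forall x : sub HS, alpha (proj1_sig x) = iota x).

End Defs.

(* Main.v *)
Require Import Defs.
From Stdlib Require Import List Arith Lia.
From Stdlib Require Import Classical ClassicalEpsilon FunctionalExtensionality ProofIrrelevance.
From Stdlib Require Fin.
Set Implicit Arguments.
Unset Strict Implicit.

Lemma sig_eq' {A : Type} (P : A -> Prop) (x y : {a | P a}) :
  proj1_sig x = proj1_sig y -> x = y.
Proof. destruct x, y; simpl; intros ->; f_equal; apply proof_irrelevance. Qed.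

Lemma hom_comp L (A B C : Structure L) (f : A -> B) (g : B -> C) :
  homomorphism f -> homomorphism g -> homomorphism (fun x => g (f x)).
Proof.
  intros [f1 f2] [g1 g2]; split.
  - intros h a. rewrite f1, g1. reflexivity.
  - intros r a H. apply (g2 r (fun i => f (a i))). auto.
Qed.

Lemma emb_comp L (A B C : Structure L) (f : A -> B) (g : B -> C) :
  embedding f -> embedding g -> embedding (fun x => g (f x)).
Proof.
  intros [fh [fi fr]] [gh [gi gr]]; split; [|split].
  - apply hom_comp; auto.
  - intros x y H. auto.
  - intros r a H. apply fr. apply (gr r (fun i => f (a i))). exact H.
Qed.

Lemma proj_emb L (A : Structure L) (S : A -> Prop) (HS : closed S) :
  embedding (fun x : sub HS => proj1_sig x).
Proof.
  split; [split|split].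
  - intros f a. reflexivity.
  - intros r a H. exact H.
  - intros x y H. apply sig_eq'. exact H.
  - intros r a H. exact H.
Qed.

Lemma pinv_props L (A B : Structure L) (h : A -> B) (hi : B -> A) (Y : B -> Prop) :
  embedding h -> (forall x, hi (h x) = x) -> (forall y, Y y -> h (hi y) = y) ->
  (forall f a, (forall i, Y (a i)) -> hi (fint B f a) = fint A f (fun i => hi (a i))) /\
  (forall r a, (forall i, Y (a i)) -> rint B r a -> rint A r (fun i => hi (a i))) /\
  (forall r a, (forall i, Y (a i)) -> rint A r (fun i => hi (a i)) -> rint B r a).
Proof.
  intros [[hf hr] [hinj hrefl]] hiK hK.
  assert (Ea : forall (n : nat) (a : Fin.t n -> B), (forall i, Y (a i)) ->
                 a = fun i => h (hi (a i))).
  { intros n a Ha. extensionality i. symmetry. auto. }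
  split; [|split].
  - intros f a Ha. transitivity (hi (h (fint A f (fun i => hi (a i))))).
    + f_equal. rewrite hf. f_equal. apply Ea. auto.
    + apply hiK.
  - intros r a Ha H. apply hrefl. rewrite <- (Ea _ a Ha). exact H.
  - intros r a Ha H. rewrite (Ea _ a Ha). apply (hr r (fun i => hi (a i))). exact H.
Qed.

Lemma emb_into L (A B C : Structure L) (h : A -> B) (hi : B -> A) (Y : B -> Prop) (e : C -> B) :
  embedding h -> (forall x, hi (h x) = x) -> (forall y, Y y -> h (hi y) = y) ->
  embedding e -> (forall c, Y (e c)) -> embedding (fun c => hi (e c)).
Proof.
  intros Hh hiK hK He HY.
  destruct (pinv_props Hh hiK hK) as [P1 [P2 P3]].
  destruct He as [[ef er] [einj erefl]].
  split; [split|split].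
  - intros f a. rewrite ef. apply P1. auto.
  - intros r a H. apply (P2 r (fun i => e (a i))); auto.
  - intros x y H. apply einj. rewrite <- (hK _ (HY x)), <- (hK _ (HY y)), H. reflexivity.
  - intros r a H. apply erefl. apply (P3 r (fun i => e (a i))); auto.
Qed.

Lemma hom_into L (A B C : Structure L) (h : A -> B) (hi : B -> A) (Y : B -> Prop) (e : C -> B) :
  embedding h -> (forall x, hi (h x) = x) -> (forall y, Y y -> h (hi y) = y) ->
  homomorphism e -> (forall c, Y (e c)) -> homomorphism (fun c => hi (e c)).
Proof.
  intros Hh hiK hK [ef er] HY.
  destruct (pinv_props Hh hiK hK) as [P1 [P2 P3]].
  split.
  - intros f a. rewrite ef. apply P1. auto.
  - intros r a H. apply (P2 r (fun i => e (a i))); auto.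
Qed.

Lemma iso_inv L (A B : Structure L) (h : A -> B) :
  isomorphism h -> exists hi : B -> A, isomorphism hi /\ (forall y, h (hi y) = y) /\
                                        (forall x, hi (h x) = x).
Proof.
  intros [Hh Hs].
  set (hi := fun y => proj1_sig (constructive_indefinite_description _ (Hs y))).
  assert (hK : forall y, h (hi y) = y).
  { intro y. unfold hi. destruct (constructive_indefinite_description _ (Hs y)). auto. }
  assert (hiK : forall x, hi (h x) = x).
  { intro x. destruct Hh as [_ [inj _]]. apply inj. apply hK. }
  exists hi. split; [|auto]. split.
  - apply (emb_into (Y := fun _ => True) (e := fun y => y) Hh hiK); auto.
    split; [split|split]; auto.
  - intro x. exists (h x). auto.
Qed.

Lemma gen_closed L (A : Structure L) (l : list A) : closed (generated l).
Proof. intros f a Ha T HT Hl. apply HT. intro i. apply Ha; auto. Qed.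

Lemma gen_in L (A : Structure L) (l : list A) y : In y l -> generated l y.
Proof. intros H T HT Hl. auto. Qed.

Lemma fg_gen L (A : Structure L) (l : list A) : fg_subset (generated l).
Proof. exists l. intro; tauto. Qed.

Lemma lift_list (A : Type) (P : A -> Prop) (l : list A) :
  (forall y, In y l -> P y) -> exists l' : list {x | P x}, map (@proj1_sig _ _) l' = l.
Proof.
  induction l as [|a l IH]; intros H.
  - exists nil. reflexivity.
  - destruct IH as [l' E]. { intros; apply H; simpl; auto. }
    exists (exist _ a (H a (or_introl eq_refl)) :: l'). simpl. f_equal. auto.
Qed.

Lemma sub_fin_gen L (A : Structure L) (S : A -> Prop) (HS : closed S) :
  fg_subset S -> fin_gen (sub HS).
Proof.
  intros [l Hl].
  destruct (@lift_list _ S l) as [l' E].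
  { intros y Hy. apply Hl. apply gen_in. auto. }
  exists l'. intros [x px] T' HT' Hl'.
  set (T := fun y : A => S y /\ forall p : S y, T' (exist _ y p)).
  assert (HT : closed T).
  { intros f a Ha. split.
    - apply HS. intro i. apply Ha.
    - intro p.
      pose proof (HT' f (fun i => exist _ (a i) (proj1 (Ha i)))
                      (fun i => proj2 (Ha i) _)) as K.
      simpl in K.
      replace p with (HS f (fun i => a i) (fun i => proj1 (Ha i))) by apply proof_irrelevance.
      exact K. }
  assert (HlT : forall y, In y l -> T y).
  { intros y Hy. split.
    - apply Hl, gen_in, Hy.
    - intro p. rewrite <- E in Hy. apply in_map_iff in Hy. destruct Hy as [z [Ez Hz]].
      assert (Ez' : z = exist S y p) by (apply sig_eq'; simpl; auto).
      exact (eq_rect _ T' (Hl' z Hz) _ Ez'). }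
  apply (proj1 (Hl x) px T HT HlT).
Qed.

Lemma cbar_self L (U : Structure L) : countable_structure U -> cbar (age U) U.
Proof.
  intros Hc. split; auto.
  intros S HS Hfg. exists (sub HS). split.
  - split. apply sub_fin_gen; auto. exists (fun x => proj1_sig x). apply proj_emb.
  - exists (fun x => x). split; [split; [split|split]|]; auto.
    intro y; exists y; auto.
Qed.

Lemma fin_bound (k : nat) (g : Fin.t k -> nat) : exists N, forall i, g i <= N.
Proof.
  induction k as [|k IH].
  - exists 0. intro i. exact (Fin.case0 (fun i => g i <= 0) i).
  - destruct (IH (fun i => g (Fin.FS i))) as [N HN].
    exists (max (g Fin.F1) N). intro i.
    apply (Fin.caseS' i (fun i => g i <= max (g Fin.F1) N)).
    + lia.
    + intro j. specialize (HN j). simpl in HN. lia.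
Qed.

Definition Inv L (U : Structure L) (X : U -> Prop) (l : list (U * U)) : Prop :=
  (exists al : U -> U, automorphism al /\ forall p, In p l -> al (fst p) = snd p) /\
  (forall p, In p l -> X (snd p)).

Definition fstep L (U : Structure L) (X : U -> Prop) (c : U -> nat) (n : nat)
  (l : list (U * U)) : list (U * U) :=
  match excluded_middle_informative (exists u, c u = n) with
  | left H => let u := proj1_sig (constructive_indefinite_description _ H) in
              (u, epsilon (inhabits u) (fun b => Inv X ((u, b) :: l))) :: l
  | right _ => l
  end.

Definition kstep L (U : Structure L) (X : U -> Prop) (c : U -> nat) (n : nat)
  (l : list (U * U)) : list (U * U) :=
  match excluded_middle_informative (exists v, c v = n /\ X v) with
  | left H => let v := proj1_sig (constructive_indefinite_description _ H) in
              (epsilon (inhabits v) (fun a => Inv X ((a, v) :: l)), v) :: l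
  | right _ => l
  end.

Fixpoint bseq L (U : Structure L) (X : U -> Prop) (c : U -> nat) (n : nat) : list (U * U) :=
  match n with
  | 0 => nil
  | S m => kstep X c m (fstep X c m (bseq X c m))
  end.

Lemma Inv_nil L (U : Structure L) (X : U -> Prop) : Inv X nil.
Proof.
  split.
  - exists (fun x => x). split.
    + split; [split; [split|split]|]; auto. intro y; exists y; auto.
    + intros p [].
  - intros p [].
Qed.


Lemma bf L (U : Structure L) (X : U -> Prop) (c : U -> nat) :
  (forall x y, c x = c y -> x = y) ->
  (forall l, Inv X l -> forall u, exists b, Inv X ((u, b) :: l)) ->
  (forall l, Inv X l -> forall v, X v -> exists a, Inv X ((a, v) :: l)) ->
  exists psi : U -> U, embedding psi /\ (forall x, X (psi x)) /\
                       (forall y, X y -> exists x, psi x = y).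
Proof.
  intros Hc Hf Hb.
  assert (fstep_inv : forall n l, Inv X l -> Inv X (fstep X c n l)).
  { intros n l Hl. unfold fstep.
    destruct (excluded_middle_informative _) as [H|H]; [|exact Hl].
    destruct (constructive_indefinite_description _ H) as [u Hu]. simpl.
    exact (epsilon_spec (inhabits u) (fun b => Inv X ((u, b) :: l)) (Hf l Hl u)). }
  assert (kstep_inv : forall n l, Inv X l -> Inv X (kstep X c n l)).
  { intros n l Hl. unfold kstep.
    destruct (excluded_middle_informative _) as [H|H]; [|exact Hl].
    destruct (constructive_indefinite_description _ H) as [v Hv]. simpl.
    destruct Hv as [Hv1 Hv2].
    exact (epsilon_spec (inhabits v) (fun a => Inv X ((a, v) :: l)) (Hb l Hl v Hv2)). }
  assert (fstep_mono : forall n l p, In p l -> In p (fstep X c n l)).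
  { intros n l p Hp. unfold fstep.
    destruct (excluded_middle_informative _) as [H|H]; simpl; auto. }
  assert (kstep_mono : forall n l p, In p l -> In p (kstep X c n l)).
  { intros n l p Hp. unfold kstep.
    destruct (excluded_middle_informative _) as [H|H]; simpl; auto. }
  assert (bseq_inv : forall n, Inv X (bseq X c n)).
  { induction n; simpl; auto using Inv_nil. }
  assert (bseq_mono : forall n m p, n <= m -> In p (bseq X c n) -> In p (bseq X c m)).
  { intros n m p Hnm. induction Hnm; auto. intro H. simpl. auto. }
  assert (bseq_u : forall u, exists b, In (u, b) (bseq X c (S (c u)))).
  { intro u. simpl. unfold fstep.
    destruct (excluded_middle_informative (exists u0, c u0 = c u)) as [H|H].
    - destruct (constructive_indefinite_description _ H) as [u' Hu']. simpl.
      apply Hc in Hu'. subst u'. eexists. apply kstep_mono. left. reflexivity.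
    - exfalso. apply H. exists u. auto. }
  assert (bseq_v : forall v, X v -> exists a, In (a, v) (bseq X c (S (c v)))).
  { intros v Xv. simpl. unfold kstep at 1.
    destruct (excluded_middle_informative (exists v0, c v0 = c v /\ X v0)) as [H|H].
    - destruct (constructive_indefinite_description _ H) as [v' Hv']. simpl.
      destruct Hv' as [Hv' _]. apply Hc in Hv'. subst v'. eexists. left. reflexivity.
    - exfalso. apply H. exists v. auto. }
  assert (common : forall n m p q, In p (bseq X c n) -> In q (bseq X c m) ->
     exists al, automorphism al /\ al (fst p) = snd p /\ al (fst q) = snd q).
  { intros n m p q Hp Hq.
    destruct (bseq_inv (max n m)) as [[al [Hal Hal2]] _].
    exists al. split; auto. split; apply Hal2.
    - apply (bseq_mono n); auto; lia.
    - apply (bseq_mono m); auto; lia. }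
  set (psi := fun x => epsilon (inhabits x) (fun b => exists n, In (x, b) (bseq X c n))).
  assert (psi_spec : forall x, exists n, In (x, psi x) (bseq X c n)).
  { intro x. apply (epsilon_spec (inhabits x) (fun b => exists n, In (x, b) (bseq X c n))).
    destruct (bseq_u x) as [b Hb']. eauto. }
  set (stg := fun x => epsilon (inhabits 0) (fun n => In (x, psi x) (bseq X c n))).
  assert (stg_spec : forall x, In (x, psi x) (bseq X c (stg x))).
  { intro x. apply (epsilon_spec (inhabits 0) (fun n => In (x, psi x) (bseq X c n))).
    apply psi_spec. }
  assert (stage : forall N, exists al, automorphism al /\
                     forall x, stg x <= N -> al x = psi x).
  { intro N. destruct (bseq_inv N) as [[al [Hal Hal2]] _].
    exists al. split; auto. intros x Hx.
    apply (Hal2 (x, psi x)). apply (bseq_mono (stg x)); auto. }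
  assert (tuple : forall k (a : Fin.t k -> U) (x : U), exists al, automorphism al /\
             al x = psi x /\ forall i, al (a i) = psi (a i)).
  { intros k a x. destruct (fin_bound (fun i => stg (a i))) as [N HN].
    destruct (stage (max N (stg x))) as [al [Hal Hal2]].
    exists al. split; auto. split.
    - apply Hal2. lia.
    - intro i. apply Hal2. specialize (HN i). simpl in HN. lia. }
  assert (tupleA : forall k (a : Fin.t k -> U), exists al, automorphism al /\
             forall i, al (a i) = psi (a i)).
  { intros k a. destruct (fin_bound (fun i => stg (a i))) as [N HN].
    destruct (stage N) as [al [Hal Hal2]].
    exists al. split; [exact Hal|].
    intro i. apply Hal2. specialize (HN i). simpl in HN. lia. }
  exists psi. split; [|split].
  - split; [split|split].
    + intros f a. destruct (tuple _ a (fint U f a)) as [al [[[[H1 H2] [H3 H4]] _] [E1 E2]]].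
      rewrite <- E1, H1. f_equal. extensionality i. auto.
    + intros r a H. destruct (tupleA _ a) as [al [[[[H1 H2] [H3 H4]] _] E2]].
      apply H2 in H. replace (fun i => psi (a i)) with (fun i => al (a i)); auto.
      extensionality i; auto.
    + intros x y H. destruct (stage (max (stg x) (stg y))) as [al [[[_ [H3 _]] _] E]].
      apply H3. rewrite !E by lia. exact H.
    + intros r a H. destruct (tupleA _ a) as [al [[[[H1 H2] [H3 H4]] _] E2]].
      apply H4. replace (fun i => al (a i)) with (fun i => psi (a i)); auto.
      extensionality i; auto.
  - intro x. destruct (psi_spec x) as [n Hn]. apply ((proj2 (bseq_inv n)) _ Hn).
  - intros y Xy. destruct (bseq_v y Xy) as [a Ha]. exists a.
    destruct (psi_spec a) as [n Hn].
    destruct (common _ _ _ _ Ha Hn) as [al [_ [E1 E2]]]. simpl in *. congruence.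
Qed.

Lemma Xclosed L (U V W : Structure L) (r : U -> V) (s : V -> W) (is : W -> V) :
  homomorphism r -> homomorphism s -> homomorphism is ->
  closed (fun y => r y = is (s (r y))).
Proof.
  intros [r1 _] [s1 _] [i1 _] f a Ha.
  rewrite r1, s1, i1. f_equal. extensionality i. apply Ha.
Qed.

Lemma forth L (U V W : Structure L) (r : U -> V) (s : V -> W) (is : W -> V) :
  homomorphism r -> homomorphism s -> homomorphism is -> (forall w, s (is w) = w) ->
  countable_structure U -> homogeneous U -> uh_retraction r ->
  forall l, Inv (fun y => r y = is (s (r y))) l ->
  forall u, exists b, Inv (fun y => r y = is (s (r y))) ((u, b) :: l).
Proof.
  intros rh sh ih sK Hcnt Hhomog Hr l [[al [Hal Hal2]] HX] u.
  destruct Hr as [_ [Huniv Hrh]].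
  destruct (Huniv U (fun x => is (s (r x))) (cbar_self Hcnt) (hom_comp (hom_comp rh sh) ih))
    as [e [He HeE]].
  assert (HTX : forall y, generated (map snd l) y -> r y = is (s (r y))).
  { intros y Hy. apply (Hy _ (Xclosed rh sh ih)).
    intros y' Hy'. apply in_map_iff in Hy'. destruct Hy' as [p [<- Hp]]. apply HX; auto. }
  set (j := fun y : sub (gen_closed (l:=map snd l)) => e (proj1_sig y)).
  assert (Hj : embedding j) by exact (emb_comp (proj_emb _) He).
  assert (Hjc : forall y, r (j y) = r (proj1_sig y)).
  { intros [y0 py]. unfold j; simpl. rewrite <- HeE. symmetry. apply HTX; auto. }
  destruct (Hrh _ (gen_closed (l:=map snd l)) (fg_gen (map snd l)) j Hj Hjc) as [g [Hg [Hgr Hgext]]].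
  destruct (iso_inv Hg) as [gi [Hgi [ggi gig]]].
  set (f := fun x => gi (e x)).
  assert (Hf : embedding f) by exact (emb_comp He (proj1 Hgi)).
  assert (f_fix : forall p, In p l -> f (snd p) = snd p).
  { intros p Hp.
    assert (Hin : generated (map snd l) (snd p)) by (apply gen_in, in_map, Hp).
    pose proof (Hgext (exist _ (snd p) Hin)) as E. simpl in E. unfold j in E. simpl in E.
    unfold f. rewrite <- E. apply gig. }
  assert (rgi : forall z, r (gi z) = r z).
  { intro z. rewrite <- (Hgr (gi z)), ggi. reflexivity. }
  assert (fX : forall x, r (f x) = is (s (r (f x)))).
  { intro x. unfold f. rewrite !rgi, <- HeE, sK. reflexivity. }
  set (g2 := fun x => f (al x)).
  assert (Hg2 : embedding g2) by exact (emb_comp (proj1 Hal) Hf).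
  set (k := fun y : sub (gen_closed (l:=u :: map fst l)) => g2 (proj1_sig y)).
  assert (Hk : embedding k) by exact (emb_comp (proj_emb _) Hg2).
  destruct (Hhomog _ (gen_closed (l:=u :: map fst l)) (fg_gen (u :: map fst l)) k Hk) as [be [Hbe Hbeext]].
  exists (g2 u). split.
  - exists be. split; auto. intros p [<-|Hp].
    + simpl. exact (Hbeext (exist _ u (@gen_in _ _ (u :: map fst l) u (or_introl eq_refl)))).
    + assert (Hin : generated (u :: map fst l) (fst p))
        by (apply gen_in; right; apply in_map, Hp).
      pose proof (Hbeext (exist _ (fst p) Hin)) as E. simpl in E. rewrite E.
      unfold k, g2. simpl.
      rewrite Hal2 by auto. apply f_fix; auto.
  - intros p [<-|Hp]; simpl; [apply fX | auto].
Qed.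

Lemma back L (U : Structure L) (X : U -> Prop) :
  forall l, Inv X l -> forall v, X v -> exists a, Inv X ((a, v) :: l).
Proof.
  intros l [[al [Hal Hal2]] HX] v Xv.
  destruct (iso_inv Hal) as [ali [_ [aK _]]].
  exists (ali v). split.
  - exists al. split; auto. intros p [<-|Hp]; simpl; auto.
  - intros p [<-|Hp]; simpl; auto.
Qed.

Unset Implicit Arguments.
Set Strict Implicit.

Theorem proposition4p5 (L : Sig) (C : Structure L -> Prop) (U V W : Structure L) :
  fraisse_class C -> fraisse_limit C U -> cbar C V -> cbar C W ->
  forall r : U -> V, uh_retraction r ->
  forall s : V -> W, retraction s ->
  exists s_hat : U -> W, uh_retraction s_hat.
Proof.
  intros HC HU HV HW r Hr s Hs.
  destruct HU as [Hcnt [Hhomog _]].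
  pose proof Hr as Hr'. destruct Hr' as [[rh [ir [irh irK]]] [Huniv Hrh]].
  destruct Hs as [sh [is [ish isK]]].
  pose proof Hcnt as [c Hc].
  destruct (bf (X := fun y => r y = is (s (r y))) Hc
              (forth rh sh ish isK Hcnt Hhomog Hr) (@back _ _ _))
    as [psi [Hpsi [psiX psiS]]].
  set (X := fun y => r y = is (s (r y))) in *.
  set (psii := fun y => epsilon (inhabits y) (fun x => psi x = y)).
  assert (psiK : forall y, X y -> psi (psii y) = y).
  { intros y Xy. exact (epsilon_spec (inhabits y) (fun x => psi x = y) (psiS y Xy)). }
  assert (psiiK : forall x, psii (psi x) = x).
  { intro x. apply (proj1 (proj2 Hpsi)). apply psiK. apply psiX. }
  assert (psiX' : forall x, r (psi x) = is (s (r (psi x)))) by exact psiX.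
  destruct (pinv_props Hpsi psiiK psiK) as [P1 [P2 P3]].
  exists (fun x => s (r (psi x))). split; [|split].
  -
    split.
    + exact (hom_comp (hom_comp (proj1 Hpsi) rh) sh).
    + exists (fun w => psii (ir (is w))). split.
      * apply (hom_into Hpsi psiiK psiK (hom_comp ish irh)).
        intro w. unfold X. rewrite irK, isK. reflexivity.
      * intro w. rewrite psiK.
        -- rewrite irK, isK. reflexivity.
        -- unfold X. rewrite irK, isK. reflexivity.
  -
    intros A h HA Hh.
    destruct (Huniv A (fun a => is (h a)) HA (hom_comp Hh ish)) as [e [He HeE]].
    assert (eX : forall a, X (e a)).
    { intro a. unfold X. rewrite <- HeE, isK. reflexivity. }
    exists (fun a => psii (e a)). split.
    + exact (emb_into Hpsi psiiK psiK He eX).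
    + intro a. rewrite psiK by apply eX. rewrite <- HeE, isK. reflexivity.
  -
    intros S HS [l Hl] iota Hiota Hcond.
    set (S' := generated (map psi l)).
    assert (imgA : forall x, S x -> S' (psi x)).
    { intros x Sx. apply Hl in Sx. apply (Sx (fun z => S' (psi z))).
      - intros f a Ha. rewrite (proj1 (proj1 Hpsi)). apply gen_closed. exact Ha.
      - intros y Hy. apply gen_in, in_map; auto. }
    assert (imgB : forall y, S' y -> S (psii y) /\ psi (psii y) = y).
    { intros y Hy. apply (Hy (fun y => S (psii y) /\ psi (psii y) = y)).
      - intros f a Ha.
        assert (Ea : a = fun i => psi (psii (a i))).
        { extensionality i. symmetry. apply Ha. }
        assert (E : fint U f a = psi (fint U f (fun i => psii (a i)))).
        { rewrite (proj1 (proj1 Hpsi)). f_equal. exact Ea. }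
        rewrite E, psiiK. split; [apply HS; intro i; apply Ha | reflexivity].
      - intros y' Hy'. apply in_map_iff in Hy'. destruct Hy' as [x [<- Hx]].
        rewrite psiiK. split; [apply Hl; apply gen_in; auto | reflexivity]. }
    assert (S'X : forall y, S' y -> X y).
    { intros y Hy. destruct (imgB y Hy) as [_ E]. rewrite <- E. apply psiX. }
    set (HS' := gen_closed (l := map psi l)).
    set (m := fun y : sub HS' =>
                exist S (psii (proj1_sig y)) (proj1 (imgB _ (proj2_sig y))) : sub HS).
    assert (Hm : embedding m).
    { split; [split|split].
      - intros f a. apply sig_eq'. simpl. apply P1. intro i. apply S'X, (proj2_sig (a i)).
      - intros r0 a H. simpl. apply (P2 r0 (fun i => proj1_sig (a i))); auto.
        intro i. apply S'X, (proj2_sig (a i)).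
      - intros x y H. apply sig_eq'. apply (f_equal (@proj1_sig _ _)) in H. simpl in H.
        transitivity (psi (psii (proj1_sig x))).
        + symmetry. apply (proj2 (imgB _ (proj2_sig x))).
        + rewrite H. apply (proj2 (imgB _ (proj2_sig y))).
      - intros r0 a H. simpl in H. apply (P3 r0 (fun i => proj1_sig (a i))); auto.
        intro i. apply S'X, (proj2_sig (a i)). }
    set (iota' := fun y : sub HS' => psi (iota (m y))).
    assert (Hiota' : embedding iota') by exact (emb_comp Hm (emb_comp Hiota Hpsi)).
    assert (cond' : forall y, r (iota' y) = r (proj1_sig y)).
    { intro y. unfold iota'. rewrite psiX'. rewrite Hcond. unfold m. simpl.
      rewrite psiK by (apply S'X; exact (proj2_sig y)).
      symmetry. apply S'X, (proj2_sig y). }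
    destruct (Hrh S' HS' (fg_gen (map psi l)) iota' Hiota' cond')
      as [be [Hbe [Hber Hbeext]]].
    assert (beX : forall y, X y -> X (be y)).
    { intros y Xy. unfold X in *. rewrite !Hber. exact Xy. }
    destruct (iso_inv Hbe) as [bei [Hbei [bK biK]]].
    exists (fun x => psii (be (psi x))). split; [|split].
    + split.
      * exact (emb_into Hpsi psiiK psiK (emb_comp Hpsi (proj1 Hbe))
                 (fun x => beX _ (psiX x))).
      * intro y. exists (psii (bei (psi y))).
        assert (Xb : X (bei (psi y))).
        { unfold X. rewrite <- (Hber (bei (psi y))), bK. apply psiX. }
        rewrite psiK by exact Xb. rewrite bK, psiiK. reflexivity.
    + intro x. rewrite psiK by (apply beX, psiX). rewrite Hber. reflexivity.
    + intro x.
      pose proof (Hbeext (exist S' (psi (proj1_sig x)) (imgA _ (proj2_sig x)))) as E.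
      simpl in E. rewrite E. unfold iota'. rewrite psiiK. f_equal.
      apply sig_eq'. unfold m; simpl. apply psiiK.
Qed.
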